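(* Let $N\ge2$, $M\ge1$, $q_1,\dots,q_N>0$, and let each $J_k:\mathbb{R}^M\to\mathbb{R}$ be convex and differentiable with $\sum_{k=1}^Nq_kJ_k$ strongly convex, with unique minimizer $w^\star$. Let $A$ be primitive, left-stochastic and balanced with Perron vector $p$, and let $\mu_1,\dots,\mu_N>0$ satisfy $q=\beta\,\mathrm{diag}\{\mu_1,\dots,\mu_N\}p$ for some $\beta>0$. If block vectors $\mathcal{W}^\star=\mathrm{col}\{w_1^\star,\dots,w_N^\star\}\in\mathbb{R}^{NM}$ and $\mathcal{Y}^\star\in\mathbb{R}^{NM}$ exist that satisfy $$\bar{\mathcal{A}}^{\mathsf T}\mathcal{M}\nabla\mathcal{J}^o(\mathcal{W}^\star)+\mathcal{P}^{-1}\mathcal{V}\mathcal{Y}^\star=0,\qquad \mathcal{V}\mathcal{W}^\star=0,$$ then $w_1^\star=w_2^\star=\cdots=w_N^\star=w^\star$.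
   Context: $A=[a_{\ell k}]\in\mathbb{R}^{N\times N}$ is nonnegative, left-stochastic ($A^{\mathsf T}\mathbf{1}_N=\mathbf{1}_N$) and primitive, with Perron vector $p$: $Ap=p$, $\mathbf{1}_N^{\mathsf T}p=1$, $p\succ0$; $P=\mathrm{diag}(p)$, and balanced means $PA^{\mathsf T}=AP$. $q=(q_1,\dots,q_N)^{\mathsf T}$. $\bar A=(I_N+A)/2$. The symmetric positive semidefinite matrix $(P-AP)/2$ has eigendecomposition $U\Sigma U^{\mathsf T}$ and $V=U\Sigma^{1/2}U^{\mathsf T}$. $\bar{\mathcal{A}}=\bar A\otimes I_M$, $\mathcal{P}=P\otimes I_M$, $\mathcal{V}=V\otimes I_M$, $\mathcal{M}=\mathrm{diag}\{\mu_1I_M,\dots,\mu_NI_M\}$, and $\nabla\mathcal{J}^o(\mathcal{W})=\mathrm{col}\{\nabla J_1(w_1),\dots,\nabla J_N(w_N)\}$. *)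

(* Defs.v *)
From HB Require Import structures.
From mathcomp Require Import all_boot all_order all_algebra.
From mathcomp Require Import all_classical all_reals all_analysis.
Set Implicit Arguments. Unset Strict Implicit. Unset Printing Implicit Defensive.
Import Order.TTheory GRing.Theory Num.Theory.
Import numFieldNormedType.Exports.
Local Open Scope ring_scope.

Definition sqnorm (R : realType) (M : nat) (x : 'rV[R]_M) : R :=
  \sum_(i < M) x ord0 i ^+ 2.

Definition convex_fun (R : realType) (M : nat) (f : 'rV[R]_M -> R) : Prop :=
  forall (x y : 'rV[R]_M) (t : R), 0 <= t <= 1 ->
    f (t *: x + (1 - t) *: y) <= t * f x + (1 - t) * f y.

Definition strongly_convex_fun (R : realType) (M : nat) (f : 'rV[R]_M -> R) : Prop :=
  exists c : R, 0 < c /\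
  forall (x y : 'rV[R]_M) (t : R), 0 <= t <= 1 ->
    f (t *: x + (1 - t) *: y)
      <= t * f x + (1 - t) * f y - c / 2 * t * (1 - t) * sqnorm (x - y).

Definition grad (R : realType) (M : nat) (f : 'rV[R]_M -> R) (w : 'rV[R]_M) : 'rV[R]_M :=
  \row_i ('d f w : 'rV[R]_M -> R) (delta_mx 0 i).

Definition nonneg_mx (R : realType) (m n : nat) (A : 'M[R]_(m, n)) : Prop :=
  forall i j, 0 <= A i j.

Definition left_stochastic (R : realType) (N : nat) (A : 'M[R]_N) : Prop :=
  A^T *m const_mx 1 = (const_mx 1 : 'cV[R]_N).

Definition primitive_mx (R : realType) (N : nat) (A : 'M[R]_N) : Prop :=
  exists k : nat, forall i j, 0 < (A ^+ k) i j.

Definition perron_vector (R : realType) (N : nat) (A : 'M[R]_N) (p : 'cV[R]_N) : Prop :=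
  A *m p = p /\ \sum_i p i ord0 = 1 /\ forall i, 0 < p i ord0.

Definition diagc (R : realType) (N : nat) (p : 'cV[R]_N) : 'M[R]_N := diag_mx p^T.

Definition balanced (R : realType) (N : nat) (A : 'M[R]_N) (p : 'cV[R]_N) : Prop :=
  diagc p *m A^T = A *m diagc p.

(* Main.v *)
Require Import Defs.
From HB Require Import structures.
From mathcomp Require Import all_boot all_order all_algebra.
From mathcomp Require Import all_classical all_reals all_analysis.
From mathcomp Require Import lra ring.
Import Order.TTheory GRing.Theory Num.Theory.
Import numFieldNormedType.Exports.
Local Open Scope ring_scope.

Lemma grad_ineq (R : realType) (M : nat) (f : 'rV[R]_M -> R) (w y : 'rV[R]_M) :
  convex_fun f -> differentiable f w ->
  \sum_i (y - w) 0 i * grad f w 0 i <= f y - f w.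
Proof.
move=> cf df.
have -> : \sum_i (y - w) 0 i * grad f w 0 i = ('d f w : 'rV[R]_M -> R) (y - w).
  rewrite [in RHS](row_sum_delta (y - w)) linear_sum; apply: eq_bigr => i _.
  by rewrite linearZ /grad mxE.
rewrite -deriveE //.
have dv := @diff_derivable _ _ _ f w (y - w) df.
rewrite /derive cvg_at_rightE //.
apply: limr_le.
  apply/cvg_ex; exists (derive f w (y - w)).
  move=> A /dv /nbhs_ballP [_ /posnumP[e] xe_A].
  by exists e%:num => //= z xe_z; rewrite lt_def => /andP [xney _]; apply: xe_A.
exists 1 => //= h; rewrite /ball /= sub0r normrN => h1 h0.
have h1' : h <= 1 by apply: ltW; apply: le_lt_trans h1; exact: ler_norm.
have := cf y w h; rewrite (ltW h0) h1' => /(_ isT) hc.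
have -> : h *: (y - w) + w = h *: y + (1 - h) *: w.
  by rewrite scalerBr scalerBl scale1r addrA addrAC.
rewrite ler_pdivrMl //.
lra.
Qed.

Lemma maxprinc (R : realType) (N : nat) (A : 'M[R]_N) (p x : 'I_N -> R) :
  nonneg_mx A -> primitive_mx A ->
  (forall l, \sum_k A l k * p k = p l) -> (forall k, 0 < p k) ->
  (forall l, p l * x l = \sum_k A l k * (p k * x k)) ->
  forall i0 l, x l = x i0.
Proof.
move=> hA [n hn] hAp hp hx i0.
have [m _ xm] : exists2 m, true & forall i, x i <= x m.
  case: (@arg_maxP _ _ _ i0 xpredT x isT) => m _ H.
  by exists m => // i; apply: H.
have step : forall a b, x a = x m -> 0 < A a b -> x b = x m.
  move=> a b xa Aab.
  have hs : \sum_k A a k * p k * (x m - x k) = 0.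
    have -> : \sum_k A a k * p k * (x m - x k) =
       x m * \sum_k A a k * p k - \sum_k A a k * (p k * x k).
      rewrite mulr_sumr -sumrB; apply: eq_bigr => k _; ring.
    by rewrite -hx hAp xa mulrC subrr.
  have H : forall k, true -> 0 <= A a k * p k * (x m - x k).
    move=> k _; apply: mulr_ge0; last by rewrite subr_ge0.
    by apply: mulr_ge0 => //; apply: ltW.
  move: (@psumr_eq0P _ _ _ _ H hs b isT) => /eqP.
  rewrite !mulf_eq0 (gt_eqF Aab) (gt_eqF (hp b)) /= subr_eq0 => /eqP.
  by move=> ->.
have ind : forall k a b, x a = x m -> 0 < (A ^+ k) a b -> x b = x m.
  elim=> [|k IH] a b xa.
    rewrite expr0 mxE; case: eqP => [<- //|]; by rewrite ltxx.
  rewrite exprS mxE => hpos.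
  case: (boolP [exists j, 0 < A a j * (A ^+ k) j b]) => [/existsP [j hj]|/existsPn H].
    have Aaj : 0 < A a j.
      rewrite lt_def hA andbT; apply/eqP => e; by move: hj; rewrite e mul0r ltxx.
    have Akj : 0 < (A ^+ k) j b by move: hj; rewrite pmulr_rgt0.
    exact: (IH j b (step a j xa Aaj) Akj).
  exfalso; move: hpos; apply/negP; rewrite -leNgt; apply: sumr_le0 => j _.
  by rewrite leNgt; apply: H.
move=> l; by rewrite (ind n m l erefl (hn m l)) (ind n m i0 erefl (hn m i0)).

Qed.

Theorem lemma2 (R : realType) (N M : nat) (hN : (2 <= N)%N) (hM : (1 <= M)%N)
  (q : 'I_N -> R) (hq : forall k, 0 < q k)
  (J : 'I_N -> 'rV[R]_M -> R)
  (hJconv : forall k, convex_fun (J k))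
  (hJdiff : forall k (w : 'rV[R]_M), differentiable (J k) w)
  (hsc : strongly_convex_fun (fun w => \sum_k q k * J k w))
  (wstar : 'rV[R]_M)
  (hmin : forall w, \sum_k q k * J k wstar <= \sum_k q k * J k w)
  (huniq : forall w, (forall w', \sum_k q k * J k w <= \sum_k q k * J k w') -> w = wstar)
  (A : 'M[R]_N) (p : 'cV[R]_N)
  (hAnn : nonneg_mx A) (hAls : left_stochastic A) (hAprim : primitive_mx A)
  (hp : perron_vector A p) (hbal : balanced A p)
  (mu : 'cV[R]_N) (hmu : forall k, 0 < mu k ord0)
  (beta : R) (hbeta : 0 < beta)
  (hqmu : forall k, q k = beta * mu k ord0 * p k ord0)
  (U : 'M[R]_N) (s : 'rV[R]_N)
  (hU : U^T *m U = 1%:M) (hs : forall i, 0 <= s ord0 i)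
  (heig : (2%:R)^-1 *: (diagc p - A *m diagc p) = U *m diag_mx s *m U^T)
  (V : 'M[R]_N) (hV : V = U *m diag_mx (map_mx Num.sqrt s) *m U^T)
  (Wstar Ystar : 'M[R]_(N, M))
  (h1 : ((2%:R)^-1 *: (1%:M + A))^T *m diag_mx mu^T
          *m (\matrix_(k < N) grad (J k) (row k Wstar))
        + invmx (diagc p) *m V *m Ystar = 0)
  (h2 : V *m Wstar = 0) :
  forall k : 'I_N, row k Wstar = wstar.
Proof.
move=> k0.
set P := diagc p.
have UUt : U *m U^T = 1%:M by apply: mulmx1C.
have VV : V *m V = (2%:R)^-1 *: (P - A *m P).
  rewrite heig hV.
  set D := diag_mx _.
  have -> : U *m D *m U^T *m (U *m D *m U^T) = U *m (D *m (U^T *m U) *m D) *m U^T.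
    by rewrite !mulmxA.
  rewrite hU mulmx1 /D mulmx_diag; congr (_ *m diag_mx _ *m _).
  by apply/matrixP => i j; rewrite !mxE -expr2 sqr_sqrtr // (ord1 i).
have Vt : V^T = V by rewrite hV !trmx_mul trmxK tr_diag_mx mulmxA.
have P1 : P *m (const_mx 1 : 'cV[R]_N) = p.
  by apply/matrixP => i j; rewrite mul_diag_mx !mxE mulr1 (ord1 j).
have L1 : (P - A *m P) *m (const_mx 1 : 'cV[R]_N) = 0.
  by rewrite mulmxBl -mulmxA P1 hp.1 subrr.
have V1 : V *m (const_mx 1 : 'cV[R]_N) = 0.
  set z := V *m _.
  have zz : z^T *m z = 0.
    by rewrite /z trmx_mul Vt -mulmxA (mulmxA V V) VV -scalemxAl L1 scaler0 mulmx0.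
  apply/matrixP => i j; rewrite (ord1 j) [RHS]mxE.
  have := congr1 (fun X : 'M[R]_1 => X 0 0) zz; rewrite !mxE => hs0.
  have H : forall k, true -> 0 <= z^T 0 k * z k 0.
    by move=> k _; rewrite mxE -expr2 sqr_ge0.
  have := @psumr_eq0P _ _ _ _ H hs0 i isT.
  rewrite [z^T 0 i]mxE -expr2 => /eqP; rewrite sqrf_eq0 => /eqP h; by move: h; rewrite /z mxE.
have LW : (P - A *m P) *m Wstar = 0.
  have : V *m (V *m Wstar) = 0 by rewrite h2 mulmx0.
  rewrite mulmxA VV -scalemxAl => /eqP; rewrite scaler_eq0 invr_eq0 pnatr_eq0 /= => /eqP //.
have PW : forall l j, (P *m Wstar) l j = p l 0 * Wstar l j.
  by move=> l j; rewrite mul_diag_mx !mxE.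
have Weq : forall l j, Wstar l j = Wstar k0 j.
  move=> l j; apply: (@maxprinc _ _ A (fun i => p i 0) (fun i => Wstar i j)) => //.
  - move=> l'; have := congr1 (fun X : 'cV[R]_N => X l' 0) hp.1; rewrite mxE => <-.
    by apply: eq_bigr.
  - by move=> kk; apply: hp.2.2.
  - move=> l'; rewrite -PW.
    move: LW; rewrite mulmxBl -mulmxA; set X := P *m Wstar => /eqP; rewrite subr_eq0 => /eqP ->.
    rewrite mxE; apply: eq_bigr => kk _; by rewrite /X PW.
have Rw : forall l, row l Wstar = row k0 Wstar.
  by move=> l; apply/rowP => j; rewrite !mxE Weq.
have h1' := congr1 (mulmx p^T) h1.
rewrite mulmxDr mulmx0 in h1'.
have pA : p^T *m ((2%:R)^-1 *: (1%:M + A))^T = p^T.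
  rewrite -trmx_mul; congr trmx.
  rewrite -scalemxAl mulmxDl mul1mx hp.1 ; apply/matrixP => i j; rewrite !mxE; lra.
have Pu : P \in unitmx.
  rewrite unitmxE /P /diagc det_diag unitfE; apply/prodf_neq0 => i _.
  by rewrite mxE gt_eqF //; apply: hp.2.2.
have pinv : p^T *m invmx P = (const_mx 1 : 'rV[R]_N).
  have <- : (const_mx 1 : 'rV[R]_N) *m P = p^T.
    by apply/matrixP => i j; rewrite (ord1 i) /P /diagc mul_mx_diag !mxE mul1r.
  by rewrite mulmxK.
have oneV : (const_mx 1 : 'rV[R]_N) *m V = 0.
  by rewrite -[const_mx 1]trmx_const -Vt -trmx_mul V1 trmx0.
rewrite !mulmxA pA pinv oneV mul0mx addr0 mul_mx_diag in h1'.
have gz : forall j, \sum_k q k * grad (J k) (row k0 Wstar) 0 j = 0.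
  move=> j; have := congr1 (fun X : 'rV[R]_M => X 0 j) h1'; rewrite !mxE => hsum.
  have -> : \sum_k q k * grad (J k) (row k0 Wstar) 0 j =
     beta * \sum_k p^T 0 k * (mu^T 0 k) * grad (J k) (row k Wstar) 0 j.
    rewrite mulr_sumr; apply: eq_bigr => k _; rewrite hqmu (Rw k) !mxE; ring.
  have -> : \sum_k p^T 0 k * (mu^T 0 k) * grad (J k) (row k Wstar) 0 j = 0.
    rewrite -[RHS]hsum; apply: eq_bigr => k _; congr (_ * _); first by rewrite [RHS]mxE.
    by rewrite [RHS]mxE.
  by rewrite mulr0.
apply: huniq => w'.
rewrite -subr_ge0 -sumrB.
have Z : \sum_k q k * (\sum_i (w' - row k0 Wstar) 0 i * grad (J k) (row k0 Wstar) 0 i) = 0.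
  rewrite (eq_bigr (fun k => \sum_i (w' - row k0 Wstar) 0 i * (q k * grad (J k) (row k0 Wstar) 0 i))); last first.
    by move=> k _; rewrite mulr_sumr; apply: eq_bigr => i _; ring.
  rewrite exchange_big /=; apply: big1 => i _.
  by rewrite -mulr_sumr gz mulr0.
rewrite -[X in X <= _]Z; apply: ler_sum => k _; rewrite -mulrBr; apply: ler_wpM2l; first exact: ltW.
exact: grad_ineq.
Qed.
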